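(* Let $H$ be a $6\times 6$ complex Hadamard matrix. Then $H$ is equivalent to a member of the family $F_6^{(2)}$ if and only if $\eta_c(H)\neq 0$ or $\eta_r(H)\neq 0$.
   Context: A $d\times d$ complex Hadamard matrix has unimodular entries and pairwise orthogonal columns. Two complex Hadamard matrices $H_1,H_2$ are equivalent if $H_2=D_1P_1H_1P_2D_2$ with $D_1,D_2$ diagonal unitary and $P_1,P_2$ permutation matrices. The dephased form of $H$ is the unique matrix $D_1HD_2$ ($D_1,D_2$ diagonal unitary) whose first row and first column consist of $1$'s. Two distinct columns $C_A,C_B$ form an ER pair if $\overline{(C_A)_j}(C_B)_j\in\{1,-1\}$ for every $j$ (analogously for rows). $\eta_c(H)$ (resp. $\eta_r(H)$) is the maximal number of pairwise disjoint ER pairs of columns (resp. rows) of the dephased form of $H$. Let $F_6$ be the Fourier matrix $(F_6)_{j,k}=\omega^{jk}$, $\omega=e^{2\pi i/6}$, $j,k=0,\dots,5$. For $a,b\in\mathbb{R}$ let $R(a,b)$ be the real $6\times6$ matrix with $R(a,b)_{j,k}=a$ if $j$ is odd and $k\in\{1,4\}$, $R(a,b)_{j,k}=b$ if $j$ is odd and $k\in\{2,5\}$, and $R(a,b)_{j,k}=0$ otherwise. The family $F_6^{(2)}$ is the set of matrices $F_6\circ\exp(iR(a,b))$ and $F_6\circ\exp(iR(a,b)^t)$ for $a,b\in\mathbb{R}$, where $\circ$ is the entrywise product and $\exp$ is applied entrywise. *)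

(* Defs.v *)
From HB Require Import structures.
From mathcomp Require Import all_boot all_order all_algebra all_fingroup.
From mathcomp Require Import reals trigo.
From mathcomp Require Import complex.
Set Implicit Arguments. Unset Strict Implicit. Unset Printing Implicit Defensive.
Import Order.TTheory GRing.Theory Num.Theory.
Local Open Scope ring_scope.
Local Open Scope complex_scope.

Section Hadamard.
Variable R : realType.
Local Notation C := R[i].

Definition expi (t : R) : C := cos t +i* sin t.

Definition unimodular (z : C) : Prop := `|z| = 1.

Definition is_complex_hadamard (n : nat) (H : 'M[C]_n) : Prop :=
  (forall i j, unimodular (H i j)) /\
  (forall j k : 'I_n, j != k -> \sum_(i < n) (H i j)^* * H i k = 0).

Definition diag_unitary (n : nat) (D : 'M[C]_n) : Prop :=
  exists d : 'rV[C]_n, (forall j, unimodular (d 0 j)) /\ D = diag_mx d.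

Definition is_perm_matrix (n : nat) (P : 'M[C]_n) : Prop :=
  exists s : 'S_n, P = perm_mx s.

Definition hadamard_equiv (n : nat) (H1 H2 : 'M[C]_n) : Prop :=
  exists D1 D2 P1 P2 : 'M[C]_n,
    [/\ diag_unitary D1, diag_unitary D2, is_perm_matrix P1, is_perm_matrix P2
      & H2 = D1 *m P1 *m H1 *m P2 *m D2].

(* The dephased form D1 H D2 with D1 = diag(conj(H i 0) * H 0 0),
   D2 = diag(conj(H 0 j)); for unimodular entries its first row and
   column consist of 1's (and it is the unique such matrix). *)
Definition dephased (n : nat) (H : 'M[C]_n.+1) : 'M[C]_n.+1 :=
  \matrix_(i, j) ((H i 0)^* * H 0 0 * H i j * (H 0 j)^*).

Definition ER_col (n : nat) (K : 'M[C]_n) (a b : 'I_n) : bool :=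
  (a != b) && [forall j, ((K j a)^* * K j b == 1) || ((K j a)^* * K j b == -1)].
Definition ER_row (n : nat) (K : 'M[C]_n) (a b : 'I_n) : bool :=
  (a != b) && [forall j, ((K a j)^* * K b j == 1) || ((K a j)^* * K b j == -1)].

(* a family S of (unordered, represented by a < b) pairs that are ER pairs
   and pairwise disjoint *)
Definition disjoint_ER (n : nat) (er : 'I_n -> 'I_n -> bool)
    (S : {set 'I_n * 'I_n}) : bool :=
  [forall p in S, (p.1 < p.2)%N && er p.1 p.2] &&
  [forall p in S, forall q in S, (p != q) ==>
     [&& p.1 != q.1, p.1 != q.2, p.2 != q.1 & p.2 != q.2]].

Definition eta_c (n : nat) (H : 'M[C]_n.+1) : nat :=
  \max_(S : {set 'I_n.+1 * 'I_n.+1} | disjoint_ER (ER_col (dephased H)) S) #|S|.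
Definition eta_r (n : nat) (H : 'M[C]_n.+1) : nat :=
  \max_(S : {set 'I_n.+1 * 'I_n.+1} | disjoint_ER (ER_row (dephased H)) S) #|S|.

Definition F6 : 'M[C]_6 :=
  \matrix_(j, k) expi (2%:R * pi * (j * k)%:R / 6%:R).

Definition Rab (a b : R) : 'M[R]_6 :=
  \matrix_(j, k)
    if odd j then
      (if (val k == 1%N) || (val k == 4%N) then a
       else if (val k == 2%N) || (val k == 5%N) then b else 0)
    else 0.

Definition F6_dephase (M : 'M[R]_6) : 'M[C]_6 :=
  \matrix_(j, k) (F6 j k * expi (M j k)).

Definition in_F6_2 (K : 'M[C]_6) : Prop :=
  exists a b : R, K = F6_dephase (Rab a b) \/ K = F6_dephase (Rab a b)^T.

End Hadamard.

(* Main.v *)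
Require Import Defs.
From HB Require Import structures.
From mathcomp Require Import all_boot all_order all_algebra all_fingroup.
From mathcomp Require Import reals trigo.
From mathcomp Require Import complex.
From mathcomp Require Import ring lra zify.
From Stdlib Require Import Lia FunctionalExtensionality.
Set Implicit Arguments. Unset Strict Implicit. Unset Printing Implicit Defensive.
Import Order.TTheory GRing.Theory Num.Theory.
Local Open Scope ring_scope.

Section Gen.
Variable C : numClosedFieldType.
Lemma cjX (x : C) n : (x ^+ n)^* = x^* ^+ n. Proof. exact: rmorphXn. Qed.
Lemma cjM (x y : C) : (x * y)^* = x^* * y^*. Proof. exact: rmorphM. Qed.
Lemma cjD (x y : C) : (x + y)^* = x^* + y^*. Proof. exact: rmorphD. Qed.
Lemma cjB (x y : C) : (x - y)^* = x^* - y^*. Proof. exact: rmorphB. Qed.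
Lemma cjN (x : C) : (- x)^* = - x^*. Proof. exact: rmorphN. Qed.
Lemma cj1 : (1 : C)^* = 1. Proof. exact: rmorph1. Qed.
Lemma cjN1 : (-1 : C)^* = -1. Proof. by rewrite cjN cj1. Qed.
Lemma cj0 : (0 : C)^* = 0. Proof. exact: rmorph0. Qed.
Lemma cjK (x : C) : x^*^* = x. Proof. exact: conjCK. Qed.

Lemma lin2 (x y z : C) : x = 0 -> y = 0 -> z = x + y -> z = 0.
Proof. by move=> -> -> ->; rewrite addr0. Qed.
Lemma lin2' (x y z : C) : x = 0 -> y = 0 -> z = x - y -> z = 0.
Proof. by move=> -> -> ->; rewrite subr0. Qed.

Lemma uniM (x y : C) : x * x^* = 1 -> y * y^* = 1 -> (x * y) * (x * y)^* = 1.
Proof. by move=> hx hy; rewrite cjM mulrACA hx hy mulr1. Qed.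
Lemma uniJ (x : C) : x * x^* = 1 -> x^* * x^*^* = 1.
Proof. by rewrite cjK mulrC. Qed.
Lemma uniN (x : C) : x * x^* = 1 -> (- x) * (- x)^* = 1.
Proof. by rewrite cjN mulrNN. Qed.
Lemma uni_neq0 (x : C) : x * x^* = 1 -> x != 0.
Proof. by move=> h; apply/eqP => e; move: h; rewrite e mul0r => /eqP; rewrite eq_sym oner_eq0. Qed.

Lemma sum_list (f : 'I_6 -> C) (s : seq 'I_6) : uniq s -> size s = 6%N ->
  \sum_i f i = \sum_(x <- s) f x.
Proof.
move=> us ss; apply: perm_big; apply: uniq_perm => //; first exact: index_enum_uniq.
move=> x; rewrite mem_index_enum; symmetry.
have hc : #|[pred y | y \in s]| = #|[pred y : 'I_6 | true]|.
  rewrite (card_uniqP us) ss -{1}(card_ord 6); exact: eq_card.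
by have /subset_cardP := hc => /(_ (subset_predT _)) /(_ x).
Qed.
End Gen.
Lemma uniq_split (T : {set 'I_6}) (x0 x1 x2 x3 x4 x5 : 'I_6) :
  x0 \in T -> x2 \in T -> x4 \in T -> x1 \notin T -> x3 \notin T -> x5 \notin T ->
  x0 != x2 -> x0 != x4 -> x2 != x4 -> x1 != x3 -> x1 != x5 -> x3 != x5 ->
  uniq [:: x0; x1; x2; x3; x4; x5].
Proof.
move=> h0 h2 h4 h1 h3 h5 d02 d04 d24 d13 d15 d35.
have d : forall x y, x \in T -> y \notin T -> (x != y) && (y != x).
  move=> x y hx hy; apply/andP; split; apply/eqP => e; move: hy; by [rewrite -e hx | rewrite e hx].
have := d _ _ h0 h1; have := d _ _ h0 h3; have := d _ _ h0 h5;
have := d _ _ h2 h1; have := d _ _ h2 h3; have := d _ _ h2 h5;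
have := d _ _ h4 h1; have := d _ _ h4 h3; have := d _ _ h4 h5.
do 9! case/andP=> ? ?.
rewrite /= !inE !negb_or; repeat (apply/andP; split); by [].
Qed.

Section W.
Variable C : numClosedFieldType.
Variable w : C.
Hypothesis w3 : w ^+ 3 = -1.
Hypothesis w2n1 : w ^+ 2 != 1.
Hypothesis wJ1 : w * w^* = 1.

Lemma w6' : w ^+ 6 = 1.
Proof. by rewrite (_ : 6 = 3 + 3)%N // exprD w3 mulrNN mulr1. Qed.

Lemma w_sum : 1 + w ^+ 2 + w ^+ 4 = 0.
Proof.
have h : (w ^+ 2 - 1) * (1 + w ^+ 2 + w ^+ 4) = w ^+ 6 - 1 by ring.
move: h; rewrite w6' subrr => /eqP; rewrite mulf_eq0 subr_eq0 (negPf w2n1) /=.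
by move/eqP.
Qed.

Lemma uni_wX n : w ^+ n * (w ^+ n)^* = 1.
Proof. by rewrite cjX -exprMn wJ1 expr1n. Qed.

Lemma w24 : w ^+ 2 != w ^+ 4.
Proof.
apply/eqP => e.
have : w ^+ 2 * (w ^+ 2 - 1) = 0 by rewrite mulrBr mulr1 -exprD /= -e subrr.
move/eqP; rewrite mulf_eq0 subr_eq0 (negPf w2n1) orbF expf_eq0 /= => /eqP w0.
by move: wJ1; rewrite w0 mul0r => /eqP; rewrite eq_sym oner_eq0.
Qed.

Definition cube (p : C) := p = w ^+ 2 \/ p = w ^+ 4.

Lemma cubeP p : cube p -> [/\ p ^+ 3 = 1, 1 + p + p ^+ 2 = 0, p * p^* = 1 & p^* = p ^+ 2].
Proof.
move=> hp.
have h3 : p ^+ 3 = 1.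
  case: hp => ->; rewrite -exprM /=; first exact: w6'.
  by rewrite (_ : (4 * 3 = 6 + 6)%N) // exprD w6' mulr1.
have h1 : 1 + p + p ^+ 2 = 0.
  case: hp => ->; rewrite -exprM /=; first exact: w_sum.
  rewrite (_ : (4 * 2 = 6 + 2)%N) // exprD w6' mul1r -w_sum; ring.
have hu : p * p^* = 1 by case: hp => ->; exact: uni_wX.
split => //.
have : p ^+ 3 * p^* = p ^+ 2 * (p * p^*) by ring.
by rewrite h3 hu mul1r mulr1.
Qed.

Lemma cube_other p q : cube p -> cube q -> p != q -> q = p ^+ 2.
Proof.
case=> ->; case=> -> //; rewrite ?eqxx // => _; rewrite -exprM //=.
by rewrite (_ : (4 * 2 = 6 + 2)%N) // exprD w6' mul1r.
Qed.

Lemma cube_sq p : cube p -> cube (p ^+ 2).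
Proof.
case=> ->; rewrite -exprM /=; first by right.
by left; rewrite (_ : (4 * 2 = 6 + 2)%N) // exprD w6' mul1r.
Qed.

Definition S (p q : C) := 1 + p^* * q + p^* ^+ 2 * q ^+ 2.

Lemma Sval p q : cube p -> cube q -> S p q = if p == q then 3%:R else 0.
Proof.
move=> hp hq; have [p3 p1 pu pJ] := cubeP hp.
case: eqP => [<-|/eqP ne].
  by rewrite /S -exprMn (mulrC _ p) pu expr1n; ring.
rewrite (cube_other hp hq ne) /S pJ.
have -> : 1 + p ^+ 2 * p ^+ 2 + p ^+ 2 ^+ 2 * p ^+ 2 ^+ 2 =
   (1 + p + p ^+ 2) + p * (p ^+ 3 - 1) + p ^+ 2 * (p ^+ 3 * p ^+ 3 - 1) by ring.
by rewrite p3 p1 mulr1 subrr !mulr0 !addr0.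
Qed.

Lemma sum3 (x y : C) : x * x^* = 1 -> y * y^* = 1 -> 1 + x + y = 0 ->
  cube x /\ y = x ^+ 2.
Proof.
move=> hx hy h.
have ey : y = - 1 - x by rewrite -[y](subr0) -h; ring.
have e1 : x + x^* = -1.
  have : x + x^* = y * y^* - 1 - x * x^*.
    by rewrite ey cjB cjN cj1; ring.
  by rewrite hx hy => ->; ring.
have e2 : x ^+ 2 + x + 1 = 0.
  have -> : x ^+ 2 + x + 1 = x * (x + x^*) - x * x^* + x + 1 by ring.
  by rewrite e1 hx; ring.
split; last first.
  have -> : y = x ^+ 2 - (x ^+ 2 + x + 1) + (1 + x + y) by ring.
  by rewrite e2 h; ring.
have : (x - w ^+ 2) * (x - w ^+ 4) = 0.
  have -> : (x - w ^+ 2) * (x - w ^+ 4) =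
     (x ^+ 2 + x + 1) - x * (1 + w ^+ 2 + w ^+ 4) + (w ^+ 6 - 1) by ring.
  by rewrite e2 w_sum w6'; ring.
by move/eqP; rewrite mulf_eq0 !subr_eq0 => /orP [] /eqP; [left|right].
Qed.
End W.

Lemma n3 k : (3 * k = k + 2 * k)%N. Proof. lia. Qed.
Lemma n4 k : (4 * k = (2 * k) * 2)%N. Proof. lia. Qed.
Lemma n5 k : (5 * k = k + (2 * k) * 2)%N. Proof. lia. Qed.

Lemma inj_nth (s : seq 'I_6) : uniq s -> size s = 6%N -> injective (fun r : 'I_6 => nth 0 s r).
Proof.
move=> us ss r r' /eqP; rewrite nth_uniq ?ss // => /eqP e; exact: val_inj.
Qed.

Lemma enum2 (A : {set 'I_6}) : #|A| = 2%N -> exists x y, [/\ x \in A, y \in A & x != y].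
Proof.
move=> cA; have u := enum_uniq (mem A); have m := mem_enum (mem A).
move: u m; rewrite cardE in cA.
case: (enum (mem A)) cA => [|x [|y [|? ?]]] // _ /= u m.
exists x, y; split; first by rewrite -m !in_cons eqxx.
  by rewrite -m !in_cons eqxx orbT.
by move: u; rewrite in_cons in_nil orbF andbT.
Qed.

Lemma le2 (A : {set 'I_6}) :
  (forall c c' c'', c \in A -> c' \in A -> c'' \in A -> c != c' -> c != c'' -> c' != c'' -> False) ->
  (#|A| <= 2)%N.
Proof.
move=> h; rewrite leqNgt; apply/negP => hA.
have u := enum_uniq (mem A); have m := mem_enum (mem A).
move: u m; rewrite cardE in hA.
case: (enum (mem A)) hA => [|x [|y [|z s]]] // _ /= u m.
move: u; rewrite !in_cons !negb_or => /andP [/andP [xy /andP [xz _]] /andP [/andP [yz _] _]].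
by apply: (h x y z) => //; rewrite -m !in_cons eqxx ?orbT.
Qed.

Lemma uniq_cols (P Q : {set 'I_6}) (a b c1 c2 c4 c5 : 'I_6) :
  a != b -> a \notin P -> a \notin Q -> b \notin P -> b \notin Q ->
  c1 \in P -> c4 \in P -> c2 \in Q -> c5 \in Q -> c1 != c4 -> c2 != c5 ->
  (forall x, x \in P -> x \notin Q) ->
  uniq [:: a; c1; c2; b; c4; c5].
Proof.
move=> ab aP aQ bP bQ h1 h4 h2 h5 d14 d25 PQ.
have d : forall x y (A : {set 'I_6}), x \in A -> y \notin A -> (x != y) && (y != x).
  move=> x y A hx hy; apply/andP; split; apply/eqP => e; move: hy; by [rewrite -e hx | rewrite e hx].
have := d _ _ _ h1 aP; have := d _ _ _ h4 aP; have := d _ _ _ h2 aQ; have := d _ _ _ h5 aQ.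
have := d _ _ _ h1 bP; have := d _ _ _ h4 bP; have := d _ _ _ h2 bQ; have := d _ _ _ h5 bQ.
have := d _ _ _ h2 (PQ _ h1); have := d _ _ _ h5 (PQ _ h1); have := d _ _ _ h2 (PQ _ h4);
have := d _ _ _ h5 (PQ _ h4).
do 12! case/andP=> ? ?.
rewrite /= !inE !negb_or; repeat (apply/andP; split); by [|rewrite eq_sym].
Qed.

Definition Ew (C : numClosedFieldType) (e1 e2 : C) (r k : 'I_6) : C :=
  if odd r then (if (val k == 1%N) || (val k == 4%N) then e1
    else if (val k == 2%N) || (val k == 5%N) then e2 else 1) else 1.

Section Core.
Variable C : numClosedFieldType.
Variable w : C.
Hypothesis w3 : w ^+ 3 = -1.
Hypothesis w2n1 : w ^+ 2 != 1.
Hypothesis wJ1 : w * w^* = 1.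
Variable G : 'M[C]_6.
Variables a b : 'I_6.
Hypothesis hab : a != b.
Hypothesis GU : forall i j, G i j * (G i j)^* = 1.
Hypothesis GO : forall j k, j != k -> \sum_i (G i j)^* * G i k = 0.
Hypothesis GA : forall i, G i a = 1.
Hypothesis GZ : forall j, G 0 j = 1.
Hypothesis GB : forall i, G i b = 1 \/ G i b = -1.

Lemma rows : exists (T : {set 'I_6}) t1 t2 b0 b1 b2,
  [/\ [/\ 0 \in T, t1 \in T, t2 \in T, b0 \notin T & b1 \notin T],
      [/\ b2 \notin T, t1 != 0, t2 != 0, t1 != t2 & b0 != b1] &
      [/\ b0 != b2, b1 != b2, (forall i, i \in T -> G i b = 1) &
       (forall i, i \notin T -> G i b = -1)]].
Proof.
pose T := [set i | G i b == 1].
have hT : forall i, i \in T -> G i b = 1 by move=> i; rewrite inE => /eqP.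
have hnT : forall i, i \notin T -> G i b = -1.
  by move=> i; rewrite inE; case: (GB i) => ->; rewrite ?eqxx.
have sb : \sum_i G i b = 0.
  rewrite -[RHS](GO hab); apply: eq_bigr => i _; by rewrite GA cj1 mul1r.
have cT : #|T| = 3%N.
  move: sb; rewrite (bigID (mem T)) /=.
  rewrite (eq_bigr (fun _ => 1)); last by move=> i /hT.
  rewrite (@eq_bigl _ _ _ _ _ (fun i => ~~ (i \in T)) (mem (~: T))); last by move=> i; rewrite /= in_setC.
  rewrite (@eq_bigr _ _ _ _ _ (mem (~: T)) _ (fun _ => -1)); last by move=> i hi; apply: hnT; rewrite -in_setC.
  rewrite !sumr_const => /eqP; rewrite addr_eq0 -mulNrn opprK eqr_nat => /eqP hc.
  have := cardsC T; rewrite card_ord hc; lia.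
have cnT : #|~: T| = 3%N by have := cardsC T; rewrite card_ord cT; lia.
have T0 : (0 : 'I_6) \in T by rewrite inE GZ.
have cT' : #|T :\ 0| = 2%N by have := cardsD1 0 T; rewrite T0 cT => /eqP; rewrite eqSS => /eqP.
have u1 := enum_uniq (mem (T :\ 0)); have u2 := enum_uniq (mem (~: T)).
have m1 := mem_enum (mem (T :\ 0)); have m2 := mem_enum (mem (~: T)).
move: u1 u2 m1 m2; rewrite cardE in cT'; rewrite cardE in cnT.
case: (enum (mem (T :\ 0))) cT' => [|t1 [|t2 [|? ?]]] // _.
case: (enum (mem (~: T))) cnT => [|x0 [|x1 [|x2 [|? ?]]]] // _.
move=> /= u1 u2 m1 m2.
exists T, t1, t2, x0, x1, x2.
have /setD1P [ht1 ht1'] : t1 \in T :\ 0 by rewrite -m1 !in_cons eqxx.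
have /setD1P [ht2 ht2'] : t2 \in T :\ 0 by rewrite -m1 !in_cons eqxx orbT.
have hx0 : x0 \notin T by rewrite -in_setC -m2 !in_cons eqxx.
have hx1 : x1 \notin T by rewrite -in_setC -m2 !in_cons eqxx orbT.
have hx2 : x2 \notin T by rewrite -in_setC -m2 !in_cons eqxx !orbT.
move: u1 u2; rewrite !in_cons !in_nil !orbF !andbT => u1 /andP [u2 u3].
rewrite negb_or in u2; case/andP: u2 => u2 u4.
by split; split.
Qed.

Section Rows.
Variables t1 t2 b0 b1 b2 : 'I_6.
Hypothesis hu : uniq [:: 0; b0; t1; b1; t2; b2].
Hypotheses (h1 : G t1 b = 1) (h2 : G t2 b = 1) (g0 : G b0 b = -1) (g1 : G b1 b = -1) (g2 : G b2 b = -1).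

Lemma colsum c : c != a -> c != b -> 1 + G t1 c + G t2 c = 0 /\ G b0 c + G b1 c + G b2 c = 0.
Proof.
move=> ca cb.
have sA : \sum_i G i c = 0.
  rewrite -[RHS](GO (j := a) (k := c)); last by rewrite eq_sym.
  by apply: eq_bigr => i _; rewrite GA cj1 mul1r.
have sB := GO (j := b) (k := c); rewrite eq_sym cb in sB; have {}sB := sB isT.
rewrite (sum_list _ hu) // !big_cons big_nil in sA.
rewrite (sum_list _ hu) // !big_cons big_nil in sB.
rewrite !GZ h1 h2 g0 g1 g2 cjN1 cj1 in sB; rewrite GZ in sA.
have two : (2%:R : C) != 0 by rewrite pnatr_eq0.
split.
  have : 2%:R * (1 + G t1 c + G t2 c) = 0.
    by apply: (lin2 sA sB); ring.
  by move/eqP; rewrite mulf_eq0 (negPf two) /= => /eqP.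
have : 2%:R * (G b0 c + G b1 c + G b2 c) = 0.
  by apply: (lin2' sA sB); ring.
by move/eqP; rewrite mulf_eq0 (negPf two) /= => /eqP.
Qed.

Lemma colshape c : c != a -> c != b ->
  [/\ cube w (G t1 c), G t2 c = G t1 c ^+ 2, cube w (G b1 c * (G b0 c)^*),
      G b1 c = G b0 c * (G b1 c * (G b0 c)^*) &
      G b2 c = G b0 c * (G b1 c * (G b0 c)^*) ^+ 2].
Proof.
move=> ca cb; have [top bot] := colsum ca cb.
have [ct e2] := sum3 w3 w2n1 (GU t1 c) (GU t2 c) top.
set u := G b0 c.
have uu : u * u^* = 1 by exact: GU.
have uu' : u^* * u = 1 by rewrite mulrC.
have bot' : 1 + G b1 c * u^* + G b2 c * u^* = 0.
  have -> : 1 + G b1 c * u^* + G b2 c * u^* = (u + G b1 c + G b2 c) * u^*.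
    by rewrite -uu'; ring.
  by rewrite bot mul0r.
have [cb1 e3] := sum3 w3 w2n1 (uniM (GU b1 c) (uniJ uu)) (uniM (GU b2 c) (uniJ uu)) bot'.
split => //.
  by rewrite mulrCA uu mulr1.
by rewrite -e3 mulrCA uu mulr1.
Qed.
Lemma Seq c c' : c != a -> c != b -> c' != a -> c' != b -> c != c' ->
  S (G t1 c) (G t1 c') + (G b0 c)^* * G b0 c' *
    S (G b1 c * (G b0 c)^*) (G b1 c' * (G b0 c')^*) = 0.
Proof.
move=> ca cb ca' cb' cc.
have [_ ex _ ey1 ey2] := colshape ca cb.
have [_ ex' _ ey1' ey2'] := colshape ca' cb'.
have sO := GO cc.
rewrite (sum_list _ hu) // !big_cons big_nil !GZ in sO.
move: ex ey1 ey2 ex' ey1' ey2' sO.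
move: (G b1 c * (G b0 c)^*) (G b1 c' * (G b0 c')^*) => y y'.
move: (G t1 c) (G t1 c') (G b0 c) (G b0 c') => x x' u u'.
move=> -> -> -> -> -> -> sO.
rewrite -[RHS]sO /S !cjM ?cjX ?cj1; ring.
Qed.
End Rows.

Lemma ortho_abs (x x' u u' y y' : C) : cube w x -> cube w x' -> cube w y -> cube w y' ->
  u * u^* = 1 -> u' * u'^* = 1 -> S x x' + u^* * u' * S y y' = 0 ->
  (x = x' -> y = y' /\ u' = - u) /\ (x != x' -> y != y').
Proof.
move=> cx cx' cy cy' hu hu'.
rewrite (Sval w3 w2n1 wJ1 cx cx') (Sval w3 w2n1 wJ1 cy cy').
have three : (3%:R : C) != 0 by rewrite pnatr_eq0.
have un : u^* * u' != 0 by rewrite mulf_neq0 // uni_neq0 // uniJ.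
case: eqP => [ex|nx]; case: eqP => [ey|ny] => E.
- split => // _; split => //.
  have : 3%:R * (u^* * u' + 1) = 0 by rewrite -[RHS]E; ring.
  move/eqP; rewrite mulf_eq0 (negPf three) /= addr_eq0 => /eqP h.
  by rewrite -[u']mul1r -hu -mulrA h mulrN1.
- by move: E; rewrite mulr0 addr0 => /eqP; rewrite (negPf three).
- by move: E; rewrite add0r => /eqP; rewrite mulf_eq0 (negPf three) (negPf un).
- by split => // _; apply/eqP.
Qed.

Lemma orient c0 (T : {set 'I_6}) t1 t2 b0 b1 b2 :
  c0 != a -> c0 != b ->
  [/\ [/\ 0 \in T, t1 \in T, t2 \in T, b0 \notin T & b1 \notin T],
      [/\ b2 \notin T, t1 != 0, t2 != 0, t1 != t2 & b0 != b1] &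
      [/\ b0 != b2, b1 != b2, (forall i, i \in T -> G i b = 1) &
       (forall i, i \notin T -> G i b = -1)]] ->
  exists be1 be2, [/\ uniq [:: 0; b0; t1; be1; t2; be2], G be1 b = -1, G be2 b = -1
     & G be1 c0 * (G b0 c0)^* = G t1 c0].
Proof.
move=> ca cb [[T0 Tt1 Tt2 Tb0 Tb1] [Tb2 t10 t20 t12 b01] [b02 b12 hT hnT]].
have hu : uniq [:: 0; b0; t1; b1; t2; b2].
  by apply: (uniq_split T0 Tt1 Tt2 Tb0 Tb1 Tb2); rewrite // eq_sym.
have [cx _ cy _ ey2] := colshape hu (hT _ Tt1) (hT _ Tt2) (hnT _ Tb0) (hnT _ Tb1) (hnT _ Tb2) ca cb.
case: (eqVneq (G b1 c0 * (G b0 c0)^*) (G t1 c0)) => e.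
  by exists b1, b2; split => //; apply: hnT.
exists b2, b1; split; try by apply: hnT.
  by apply: (uniq_split T0 Tt1 Tt2 Tb0 Tb2 Tb1); rewrite // eq_sym.
rewrite ey2 mulrAC GU mul1r.
by rewrite (cube_other w3 cy cx e).
Qed.

Lemma core_main : exists (rho kap : 'I_6 -> 'I_6) (e1 e2 : C),
  [/\ injective rho, injective kap, e1 * e1^* = 1, e2 * e2^* = 1 &
      forall r k, G (rho r) (kap k) = w ^+ (r * k) * Ew e1 e2 r k].
Proof.
have [T [t1 [t2 [b0 [b1 [b2 hR]]]]]] := rows.
pose D := [set c : 'I_6 | (c != a) && (c != b)].
have cD : #|D| = 4%N.
  have -> : D = ~: [set a; b] by apply/setP => c; rewrite !inE negb_or.
  by rewrite cardsCs setCK cards2 hab card_ord.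
have [c0 c0D] : exists c0, c0 \in D by apply/set0Pn; rewrite -card_gt0 cD.
have /andP [c0a c0b] : (c0 != a) && (c0 != b) by rewrite inE in c0D.
have [be1 [be2 [hu g1 g2 or0]]] := orient c0a c0b hR.
case: hR => [[T0 Tt1 Tt2 Tb0 Tb1] _ [_ _ hT hnT]].
have h1 := hT _ Tt1; have h2 := hT _ Tt2; have g0 := hnT _ Tb0.
have inD : forall c, c \in D -> (c != a) /\ (c != b) by move=> c; rewrite inE => /andP.
have yx : forall c, c \in D -> G be1 c * (G b0 c)^* = G t1 c.
  move=> c /inD [ca cb].
  case: (eqVneq c c0) => [->//|cc0].
  have [cx _ cy _ _] := colshape hu h1 h2 g0 g1 g2 ca cb.
  have [cx0 _ cy0 _ _] := colshape hu h1 h2 g0 g1 g2 c0a c0b.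
  have [o1 o2] := ortho_abs cx cx0 cy cy0 (GU b0 c) (GU b0 c0) (Seq hu h1 h2 g0 g1 g2 ca cb c0a c0b cc0).
  case: (eqVneq (G t1 c) (G t1 c0)) => ex.
    by rewrite (o1 ex).1 or0 ex.
  have ey' : G t1 c0 != G be1 c * (G b0 c)^* by rewrite -or0 eq_sym; exact: o2.
  have ex' : G t1 c0 != G t1 c by rewrite eq_sym.
  by rewrite (cube_other w3 cx0 cy ey') (cube_other w3 cx0 cx ex').
have pairs : forall c c', c \in D -> c' \in D -> c != c' -> G t1 c = G t1 c' -> G b0 c' = - G b0 c.
  move=> c c' /inD [ca cb] /inD [ca' cb'] cc ex.
  have [cx _ cy _ _] := colshape hu h1 h2 g0 g1 g2 ca cb.
  have [cx' _ cy' _ _] := colshape hu h1 h2 g0 g1 g2 ca' cb'.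
  have [o1 o2] := ortho_abs cx cx' cy cy' (GU b0 c) (GU b0 c') (Seq hu h1 h2 g0 g1 g2 ca cb ca' cb' cc).
  exact: (o1 ex).2.
have cubeD : forall c, c \in D -> cube w (G t1 c).
  by move=> c /inD [ca cb]; have [] := colshape hu h1 h2 g0 g1 g2 ca cb.
pose P := [set c in D | G t1 c == w ^+ 2].
pose Q := [set c in D | G t1 c == w ^+ 4].
have noth : forall (p : C) c c' c'', c \in D -> c' \in D -> c'' \in D ->
    G t1 c = p -> G t1 c' = p -> G t1 c'' = p ->
    c != c' -> c != c'' -> c' != c'' -> False.
  move=> p c c' c'' hc hc' hc'' e e' e'' d1 d2 d3.
  have u1 := pairs _ _ hc hc' d1 (etrans e (esym e')).
  have u2 := pairs _ _ hc hc'' d2 (etrans e (esym e'')).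
  have u3 := pairs _ _ hc' hc'' d3 (etrans e' (esym e'')).
  have : G b0 c + G b0 c = 0 by rewrite -{2}[G b0 c]opprK -u1 -u3 u2 subrr.
  rewrite -mulr2n -mulr_natr => /eqP; rewrite mulf_eq0 pnatr_eq0 orbF.
  by rewrite (negPf (uni_neq0 (GU b0 c))).
have lP : (#|P| <= 2)%N.
  apply: le2 => c c' c''; rewrite !inE => /andP [hc /eqP e] /andP [hc' /eqP e'] /andP [hc'' /eqP e''].
  by apply: (noth _ _ _ _ _ _ _ e e' e''); rewrite inE.
have lQ : (#|Q| <= 2)%N.
  apply: le2 => c c' c''; rewrite !inE => /andP [hc /eqP e] /andP [hc' /eqP e'] /andP [hc'' /eqP e''].
  by apply: (noth _ _ _ _ _ _ _ e e' e''); rewrite inE.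
have PQ : forall x, x \in P -> x \notin Q.
  by move=> x; rewrite !inE => /andP [_ /eqP ->]; rewrite (negPf (w24 w2n1 wJ1)) andbF.
have UPQ : P :|: Q = D.
  apply/setP => c; rewrite !inE -andb_orr.
  case hc: ((c != a) && (c != b)) => //=.
  have : c \in D by rewrite inE hc.
  by move/cubeD; case=> ->; rewrite eqxx ?orbT.
have IPQ : P :&: Q = set0.
  apply/setP => c; rewrite in_setI in_set0; apply/negP => /andP [hp hq].
  by move: (PQ c hp); rewrite hq.
have := cardsUI P Q; rewrite UPQ IPQ cards0 cD addn0 => cPQ.
have cP : #|P| = 2%N by lia.
have cQ : #|Q| = 2%N by lia.
have [c1 [c4 [P1 P4 d14]]] := enum2 cP.
have [c2 [c5 [Q2 Q5 d25]]] := enum2 cQ.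
have uk : uniq [:: a; c1; c2; b; c4; c5].
  apply: (uniq_cols hab _ _ _ _ P1 P4 Q2 Q5 d14 d25 PQ); by rewrite !inE ?eqxx ?andbF.
pose rho := fun r : 'I_6 => nth 0 [:: 0; b0; t1; be1; t2; be2] r.
have colF : forall c (k : nat) e, c \in D -> G t1 c = w ^+ (2 * k) -> G b0 c = w ^+ k * e ->
    forall r : 'I_6, G (rho r) c = w ^+ (r * k) * (if odd r then e else 1).
  move=> c k e cD' ex eu r.
  have [ca cb] := inD c cD'.
  have [_ ex2 _ ey1 ey2] := colshape hu h1 h2 g0 g1 g2 ca cb.
  rewrite (yx c cD') in ey1 ey2.
  case: r => [[|[|[|[|[|[|r]]]]]] hr] //=; rewrite ?GZ ?ex2 ?ey1 ?ey2 ?ex ?eu.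
  - by rewrite mul0n expr0 mulr1.
  - by rewrite mul1n.
  - by rewrite mulr1.
  - by rewrite n3 exprD mulrAC.
  - by rewrite n4 mulr1 -exprM.
  - by rewrite n5 exprD -exprM mulrAC.
have /setIdP [D1 /eqP x1] := P1; have /setIdP [D4 /eqP x4] := P4.
have /setIdP [D2 /eqP x2] := Q2; have /setIdP [D5 /eqP x5] := Q5.
pose e1 := G b0 c1 * w^*; pose e2 := G b0 c2 * (w ^+ 2)^*.
have u1 : G b0 c1 = w ^+ 1 * e1 by rewrite /e1 expr1 mulrCA wJ1 mulr1.
have u2 : G b0 c2 = w ^+ 2 * e2 by rewrite /e2 mulrCA (uni_wX wJ1) mulr1.
have u4 : G b0 c4 = w ^+ 4 * e1.
  rewrite (pairs _ _ D1 D4 d14 (etrans x1 (esym x4))) u1.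
  by rewrite (_ : 4 = 3 + 1)%N // exprD w3 mulN1r mulNr.
have u5 : G b0 c5 = w ^+ 5 * e2.
  rewrite (pairs _ _ D2 D5 d25 (etrans x2 (esym x5))) u2.
  by rewrite (_ : 5 = 3 + 2)%N // exprD w3 mulN1r mulNr.
have w8 : w ^+ (2 * 4) = w ^+ 2 by rewrite (_ : (2 * 4 = 6 + 2)%N) // exprD (w6' w3) mul1r.
have w10 : w ^+ (2 * 5) = w ^+ 4 by rewrite (_ : (2 * 5 = 6 + 4)%N) // exprD (w6' w3) mul1r.
exists rho, (fun k : 'I_6 => nth 0 [:: a; c1; c2; b; c4; c5] k), e1, e2.
split.
- exact: inj_nth.
- exact: inj_nth.
- exact: uniM (GU _ _) (uniJ wJ1).
- exact: uniM (GU _ _) (uniJ (uni_wX wJ1 2)).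
move=> r k.
case: k => [[|[|[|[|[|[|k]]]]]] hk] //=.
- by rewrite GA muln0 expr0 mul1r /Ew; case: odd.
- by rewrite (colF c1 1%N e1 D1 x1 u1) /Ew /=.
- by rewrite (colF c2 2%N e2 D2 x2 u2) /Ew /=.
- have wp3 : forall n, w ^+ (n * 3) = (-1) ^+ n by move=> n; rewrite mulnC exprM w3.
  case: r => [[|[|[|[|[|[|r]]]]]] hr] //=; rewrite /Ew /= mulr1 wp3 -signr_odd /=;
    by rewrite ?GZ ?h1 ?h2 ?g0 ?g1 ?g2 ?expr0 ?expr1.
- by rewrite (colF c4 4%N e1 D4 (etrans x4 (esym w8)) u4) /Ew /=.
- by rewrite (colF c5 5%N e2 D5 (etrans x5 (esym w10)) u5) /Ew /=.
Qed.
End Core.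

Section RR.
Variable R : realType.
Local Notation C := R[i].

Lemma uniP (z : C) : unimodular z -> z * z^* = 1.
Proof.
case: z => a b; rewrite /unimodular normc_def /= => h.
have hp : 0 <= a ^+ 2 + b ^+ 2 by rewrite addr_ge0 // sqr_ge0.
have h2 : a ^+ 2 + b ^+ 2 = 1.
  case: h => h. by rewrite -(sqr_sqrtr hp) h expr1n.
apply/eqP; rewrite eq_complex /=; apply/andP; split; apply/eqP.
  by rewrite -h2; ring.
by ring.
Qed.

Lemma uniI (z : C) : z * z^* = 1 -> unimodular z.
Proof.
case: z => a b /eqP; rewrite eq_complex /= => /andP [/eqP h _].
rewrite /unimodular normc_def /=.
have -> : a ^+ 2 + b ^+ 2 = 1 by rewrite -h; ring.
by rewrite sqrtr1.
Qed.
Lemma expi0 : expi (0:R) = 1.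
Proof. by rewrite /expi cos0 sin0. Qed.

Lemma expiD (s t : R) : expi (s + t) = expi s * expi t.
Proof. by rewrite /expi cosD sinD /=; apply/eqP; rewrite eq_complex /= !eqxx /=; apply/eqP; ring. Qed.

Lemma expiJ (t : R) : expi t * (expi t)^* = 1.
Proof. rewrite /expi /=; apply/eqP; rewrite eq_complex /= -(cos2Dsin2 t); apply/andP; split; apply/eqP; ring. Qed.

Lemma expiMn (n : nat) (t : R) : expi (n%:R * t) = expi t ^+ n.
Proof.
elim: n => [|n IH]; first by rewrite mul0r expi0 expr0.
by rewrite -addn1 natrD mulrDl mul1r expiD IH exprD expr1.
Qed.

Lemma expipi : expi (pi : R) = -1.
Proof. by rewrite /expi cospi sinpi; apply/eqP; rewrite eq_complex /= oppr0 !eqxx. Qed.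

Definition w6 : C := expi (2%:R * pi / 6%:R).

Lemma F6E (j k : 'I_6) : F6 R j k = w6 ^+ (j * k).
Proof.
rewrite /F6 mxE /w6 -expiMn; congr expi.
rewrite natrM; ring.
Qed.

Lemma w6_3 : w6 ^+ 3 = -1.
Proof.
rewrite /w6 -expiMn -expipi; congr expi.
by field.
Qed.

Lemma w6_6 : w6 ^+ 6 = 1.
Proof. by rewrite (_ : 6 = 3 + 3)%N // exprD w6_3 mulrNN mulr1. Qed.

Lemma w6_mod n : w6 ^+ n = w6 ^+ (n %% 6).
Proof.
by rewrite {1}(divn_eq n 6) exprD mulnC exprM w6_6 expr1n mul1r.
Qed.

Lemma w6_2_neq1 : w6 ^+ 2 != 1.
Proof.
apply/eqP => h.
have : w6 ^+ 3 = w6 by rewrite exprS h mulr1.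
rewrite w6_3 /w6 /expi => [[]] hc _.
have : 0 < cos (2%:R * pi / 6%:R :> R).
  apply: cos_gt0_pihalf. have := pi_gt0 R => hp.
  apply/andP; split; lra.
by rewrite -hc; lra.
Qed.
Lemma expi_onto (z : C) : z * z^* = 1 -> exists t, expi t = z.
Proof.
case: z => a b /eqP; rewrite eq_complex /= => /andP [/eqP h _].
have h2 : a ^+ 2 + b ^+ 2 = 1 by rewrite -h; ring.
have ha : -1 <= a <= 1 by apply/andP; split; nra.
have [_ hc] := acos_def ha.
have hs := sin_acos ha.
have hb : 1 - a ^+ 2 = b ^+ 2 by rewrite -h2; ring.
rewrite hb sqrtr_sqr in hs.
case: (lerP 0 b) => hb0.
  exists (acos a); rewrite /expi hc hs ger0_norm //.
exists (- acos a); rewrite /expi cosN sinN hc hs ltr0_norm // opprK //.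
Qed.

Lemma F6dE (al be : R) (r k : 'I_6) :
  F6_dephase (Rab al be) r k = w6 ^+ (r * k) * Ew (expi al) (expi be) r k.
Proof.
rewrite /F6_dephase mxE F6E; congr (_ * _).
rewrite /Ew /Rab mxE.
case: (odd r); last exact: expi0.
case: ifP => _ //; case: ifP => _ //; exact: expi0.
Qed.

Lemma F6dT (al be : R) : F6_dephase (Rab al be)^T = (F6_dephase (Rab al be))^T.
Proof.
by apply/matrixP => r k; rewrite !mxE mulnC.
Qed.

Lemma w6J1 : w6 * w6^* = 1.
Proof. exact: expiJ. Qed.

Lemma equiv_mxE n (d e : 'rV[C]_n) (s t : 'S_n) (K : 'M[C]_n) i j :
  (diag_mx d *m perm_mx s *m K *m perm_mx t *m diag_mx e) i j
   = d 0 i * K (s i) ((t^-1)%g j) * e 0 j.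
Proof.
rewrite mul_mx_diag mxE -[t]invgK -col_permE mxE -mulmxA -row_permE mul_diag_mx !mxE.
by rewrite !invgK.
Qed.

Lemma equiv_of_entries n (K H : 'M[C]_n) (d e : 'I_n -> C) (rho kap : 'I_n -> 'I_n) :
  injective rho -> injective kap -> (forall i, d i * (d i)^* = 1) -> (forall j, e j * (e j)^* = 1) ->
  (forall r k, H (rho r) (kap k) = d (rho r) * K r k * e (kap k)) -> hadamard_equiv K H.
Proof.
move=> ir ik hd he hH.
pose s := perm ir; pose t := perm ik.
exists (diag_mx (\row_i d i)), (diag_mx (\row_j e j)), (perm_mx (s^-1)%g), (perm_mx t).
split.
- by exists (\row_i d i); split => // j; rewrite mxE; apply: uniI.
- by exists (\row_j e j); split => // j; rewrite mxE; apply: uniI.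
- by exists (s^-1)%g.
- by exists t.
apply/matrixP => i j; rewrite equiv_mxE !mxE.
have := hH ((s^-1)%g i) ((t^-1)%g j).
have e1 : rho ((s^-1)%g i) = i by rewrite -(permE ir) permKV.
have e2 : kap ((t^-1)%g j) = j by rewrite -(permE ik) permKV.
by rewrite e1 e2.
Qed.

Lemma entries_of_equiv n (K H : 'M[C]_n) : hadamard_equiv K H ->
  exists (d e : 'I_n -> C) (s t : 'S_n),
    [/\ forall i, d i * (d i)^* = 1, forall j, e j * (e j)^* = 1 &
        forall i j, H i j = d i * K (s i) (t j) * e j].
Proof.
case=> D1 [D2 [P1 [P2 [[d1 [hd1 ->]] [d2 [hd2 ->]] [s1 ->] [s2 ->] ->]]]].
exists (fun i => d1 0 i), (fun j => d2 0 j), s1, (s2^-1)%g; split.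
- by move=> i; apply: uniP.
- by move=> i; apply: uniP.
by move=> i j; rewrite equiv_mxE.
Qed.

Lemma req1 (x y z : C) : z = 1 -> x = z * y -> x = y.
Proof. by move=> -> ->; rewrite mul1r. Qed.

Lemma hard_col (H : 'M[C]_6) (a b : 'I_6) : is_complex_hadamard H -> ER_col (dephased H) a b ->
  exists al be, hadamard_equiv (F6_dephase (Rab al be)) H.
Proof.
case=> HU HO /andP [hab /forallP hER].
have hu : forall i j, H i j * (H i j)^* = 1 by move=> i j; apply: uniP.
have hu' : forall i j, (H i j)^* * H i j = 1 by move=> i j; rewrite mulrC.
pose G := \matrix_(i, j) (H i j * (H i a)^* * (H 0 j)^* * H 0 a).
have GU : forall i j, G i j * (G i j)^* = 1.
  move=> i j; rewrite mxE.
  by apply: uniM; [apply: uniM; [apply: uniM|]|]; rewrite ?hu // uniJ.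
have GO : forall j k, j != k -> \sum_i (G i j)^* * G i k = 0.
  move=> j k jk.
  rewrite (eq_bigr (fun i => (H 0 j * (H 0 a)^* * (H 0 k)^* * H 0 a) * ((H i j)^* * H i k))).
    by rewrite -mulr_sumr HO // mulr0.
  move=> i _; rewrite !mxE !cjM !cjK.
  by apply: (req1 (hu i a)); ring.
have GA : forall i, G i a = 1.
  move=> i; rewrite mxE; apply: (req1 (hu i a)); apply: (req1 (hu 0 a)); ring.
have GZ : forall j, G 0 j = 1.
  move=> j; rewrite mxE; apply: (req1 (hu 0 j)); apply: (req1 (hu 0 a)); ring.
have GB : forall i, G i b = 1 \/ G i b = -1.
  move=> i; have := hER i.
  have -> : ((dephased H) i a)^* * (dephased H) i b = G i b.
    rewrite !mxE !cjM !cjK; apply: (req1 (hu i 0)); apply: (req1 (hu 0 0)); ring.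
  by case/orP => /eqP ->; [left|right].
have [rho [kap [e1 [e2 [ir ik he1 he2 hG]]]]] :=
  core_main w6_3 w6_2_neq1 w6J1 hab GU GO GA GZ GB.
have [al hal] := expi_onto he1.
have [be hbe] := expi_onto he2.
exists al, be.
apply: (equiv_of_entries (d := fun i => H i a) (e := fun j => H 0 j * (H 0 a)^*) ir ik).
- by move=> i; exact: hu.
- by move=> j; apply: uniM => //; apply: uniJ.
move=> r k; rewrite F6dE hal hbe -hG mxE.
apply: esym; apply: (req1 (hu (rho r) a)); apply: (req1 (hu 0 (kap k))); apply: (req1 (hu 0 a)); ring.
Qed.

Lemma ER_sym (K : 'M[C]_6) a b : ER_col K a b -> ER_col K b a.
Proof.
case/andP => ab /forallP h; apply/andP; split; first by rewrite eq_sym.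
apply/forallP => j; have := h j.
have -> : (K j b)^* * K j a = ((K j a)^* * K j b)^* by rewrite cjM cjK mulrC.
by case/orP => /eqP ->; rewrite ?cj1 ?cjN1 eqxx ?orbT.
Qed.

Lemma eta_pair (H : 'M[C]_6) : eta_c H <> 0%N -> exists a b, ER_col (dephased H) a b.
Proof.
move=> ne.
case: (boolP [exists a, exists b, ER_col (dephased H) a b]) => [/existsP [a /existsP [b h]]|no].
  by exists a, b.
exfalso; apply: ne; apply/eqP; rewrite -leqn0; apply/bigmax_leqP => S hS.
rewrite leqn0 cards_eq0; apply/eqP/setP => p; rewrite in_set0; apply/negP => hp.
move: hS => /andP [/forallP h1 _]; have := h1 p; rewrite hp /= => /andP [_ er].
move: no; rewrite negb_exists => /forallP /(_ p.1); rewrite negb_exists => /forallP /(_ p.2).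
by rewrite er.
Qed.

Lemma pair_eta (H : 'M[C]_6) a b : ER_col (dephased H) a b -> eta_c H <> 0%N.
Proof.
wlog lt : a b / (a < b)%N.
  move=> hw h; case: (ltngtP a b) => [ab|ba|e]; first exact: hw h.
    by apply: (hw b a) => //; apply: ER_sym.
  by move: h; rewrite /ER_col (val_inj e) eqxx.
move=> h; apply/eqP; rewrite -lt0n.
have : (#|[set (a, b)]| <= eta_c H)%N.
  apply: (leq_bigmax_cond (F := fun S : {set 'I_6 * 'I_6} => #|S|)).
  apply/andP; split; apply/forallP => p; apply/implyP; rewrite in_set1 => /eqP -> //=.
    by rewrite lt h.
  by apply/forallP => q; apply/implyP; rewrite in_set1 => /eqP ->; rewrite eqxx.
by rewrite cards1.
Qed.

Lemma depE (H : 'M[C]_6) j a b : (forall i j, H i j * (H i j)^* = 1) ->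
  ((dephased H) j a)^* * (dephased H) j b = (H j a)^* * H j b * (H 0 a * (H 0 b)^*).
Proof.
move=> hu; rewrite !mxE !cjM !cjK; apply: (req1 (hu j 0)); apply: (req1 (hu 0 0)); ring.
Qed.

Lemma sign_pm (m n : nat) : ((-1 : C) ^+ m * (-1) ^+ n == 1) || ((-1 : C) ^+ m * (-1) ^+ n == -1).
Proof. by rewrite -exprD -signr_odd; case: odd; rewrite ?expr0 ?expr1 eqxx ?orbT. Qed.

Lemma easy_col (H : 'M[C]_6) al be : (forall i j, unimodular (H i j)) ->
  hadamard_equiv (F6_dephase (Rab al be)) H -> exists a b, ER_col (dephased H) a b.
Proof.
move=> HU /entries_of_equiv [d [e [s [t [hd he hH]]]]].
have hu : forall i j, H i j * (H i j)^* = 1 by move=> i j; apply: uniP.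
pose z : 'I_6 := Ordinal (isT : (0 < 6)%N).
pose th : 'I_6 := Ordinal (isT : (3 < 6)%N).
pose K := F6_dephase (Rab al be).
have K0 : forall x, K x z = 1 by move=> x; rewrite F6dE /Ew muln0 expr0 mul1r; case: odd.
have K3 : forall x, K x th = (-1) ^+ x.
  by move=> x; rewrite F6dE /Ew mulnC exprM w6_3; case: odd; rewrite mulr1.
exists ((t^-1)%g z), ((t^-1)%g th).
apply/andP; split.
  by apply/eqP => /perm_inj.
apply/forallP => j; rewrite depE // !hH !permKV !K0 !K3.
have -> : (d j * 1 * e ((t^-1)%g z))^* * (d j * (-1) ^+ s j * e ((t^-1)%g th)) *
  (d 0 * 1 * e ((t^-1)%g z) * (d 0 * (-1) ^+ s 0 * e ((t^-1)%g th))^*) =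
  (-1) ^+ s j * (-1) ^+ s 0.
  rewrite !cjM cj1 cjX cjN1.
  apply: (req1 (hd j)); apply: (req1 (hd 0)); apply: (req1 (he ((t^-1)%g z))); apply: (req1 (he ((t^-1)%g th))).
  ring.
exact: sign_pm.
Qed.

Lemma cjS6 (F : 'I_6 -> C) : (\sum_i F i)^* = \sum_i (F i)^*.
Proof. exact: rmorph_sum. Qed.

Lemma had_tr (H : 'M[C]_6) : is_complex_hadamard H -> is_complex_hadamard H^T.
Proof.
case=> HU HO; split; first by move=> i j; rewrite mxE.
have hu : forall i j, H i j * (H i j)^* = 1 by move=> i j; apply: uniP.
have hu' : forall i j, (H i j)^* * H i j = 1 by move=> i j; rewrite mulrC.
have six : (6%:R : C) != 0 by rewrite pnatr_eq0.
pose M := \matrix_(i, j) ((6%:R)^-1 * (H j i)^*).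
have MH : M *m H = 1%:M.
  apply/matrixP => j k; rewrite !mxE.
  case: (eqVneq j k) => [<-|jk].
    rewrite (eq_bigr (fun _ => (6%:R : C)^-1)); last by move=> i _; rewrite mxE -mulrA hu' mulr1.
    by rewrite big_const_ord /=; field.
  rewrite (eq_bigr (fun i => (6%:R : C)^-1 * ((H i j)^* * H i k))); last by move=> i _; rewrite mxE mulrA.
  by rewrite -mulr_sumr HO // mulr0.
have HM := mulmx1C MH.
move=> j k jk.
have E : \sum_i H j i * (H k i)^* = 0.
  have := congr1 (fun A : 'M[C]_6 => A j k) HM; rewrite !mxE (negPf jk) /=.
  rewrite (eq_bigr (fun i => (6%:R : C)^-1 * (H j i * (H k i)^*))); last by move=> i _; rewrite mxE mulrCA.
  by rewrite -mulr_sumr => /eqP; rewrite mulf_eq0 invr_eq0 (negPf six) /= => /eqP.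
rewrite (eq_bigr (fun i => (H j i * (H k i)^*)^*)); last by move=> i _; rewrite !mxE cjM cjK mulrC.
by rewrite -cjS6 E cj0.
Qed.

Lemma equiv_tr (K H : 'M[C]_6) : hadamard_equiv K H -> hadamard_equiv K^T H^T.
Proof.
case/entries_of_equiv => d [e [s [t [hd he hH]]]].
apply: (equiv_of_entries (d := e) (e := d) (rho := (t^-1)%g) (kap := (s^-1)%g) (@perm_inj _ _) (@perm_inj _ _) he hd).
by move=> r k; rewrite !mxE hH !permKV; ring.
Qed.

Lemma eta_tr (H : 'M[C]_6) : eta_r H = eta_c H^T.
Proof.
have dT : dephased H^T = (dephased H)^T.
  by apply/matrixP => i j; rewrite !mxE; ring.
rewrite /eta_r /eta_c.
have -> : ER_row (dephased H) = ER_col (dephased H^T).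
  apply: functional_extensionality => a; apply: functional_extensionality => b.
  rewrite dT /ER_row /ER_col; congr (_ && _); apply: eq_forallb => j; rewrite !mxE //.
by [].
Qed.
End RR.

Theorem proposition2 (R : realType) (H : 'M[R[i]]_6) :
  is_complex_hadamard H ->
  ((exists K : 'M[R[i]]_6, in_F6_2 K /\ hadamard_equiv K H) <->
   (eta_c H <> 0%N \/ eta_r H <> 0%N)).
Proof.
move=> hH; have HU := hH.1.
split.
  case=> K [[al [be [->|->]]] heq].
    left; have [a [b h]] := easy_col HU heq.
    exact: pair_eta h.
  right; rewrite eta_tr.
  have heq' : hadamard_equiv (F6_dephase (Rab al be)) H^T.
    by rewrite -[F6_dephase _]trmxK -F6dT; apply: equiv_tr.
  have HU' : forall i j, unimodular (H^T i j) by move=> i j; rewrite mxE.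
  have [a [b h]] := easy_col HU' heq'.
  exact: pair_eta h.
case=> [ne|ne].
  have [a [b h]] := eta_pair ne.
  have [al [be heq]] := hard_col hH h.
  by exists (F6_dephase (Rab al be)); split => //; exists al, be; left.
rewrite eta_tr in ne.
have [a [b h]] := eta_pair ne.
have [al [be heq]] := hard_col (had_tr hH) h.
exists (F6_dephase (Rab al be)^T); split; first by exists al, be; right.
by rewrite F6dT -[H]trmxK; apply: equiv_tr.
Qed.
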